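(* For every integer $n\ge1$, $$\frac{[(2n)!]^2}{(2n-1)!\,(2n+1)!}=\sum_{k=1}^n\binom{2n}{2k}\frac{2^{2k}B_{2k}}{2n-2k+1}.$$
   Context: Bernoulli numbers $B_n$ are defined by $\frac{t}{e^t-1}=\sum_{n\ge0}B_nt^n/n!$. *)

(* Defs.v *)
From HB Require Import structures.
From mathcomp Require Import all_boot all_order all_algebra.
Set Implicit Arguments. Unset Strict Implicit. Unset Printing Implicit Defensive.
Import Order.TTheory GRing.Theory Num.Theory.
Local Open Scope ring_scope.

(* t/(e^t-1) = sum B_n t^n/n!  is equivalent (as formal power series) to
   (sum_n B_n t^n/n!) * (sum_m t^m/(m+1)!) = 1, i.e.
   B_0 = 1 and for n >= 1:  sum_{k=0}^{n} B_k / (k! (n-k+1)!) = 0,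
   i.e.  B_n = - n! * sum_{k<n} B_k / (k! (n-k+1)!).
   bern_seq n = [:: B_0; ...; B_n]. *)
Fixpoint bern_seq (n : nat) : seq rat :=
  match n with
  | 0 => [:: 1]
  | n'.+1 =>
      let s := bern_seq n' in
      rcons s (- (n'.+1)`!%:R *
                 \sum_(k < n'.+1) s`_k / ((k`!)%:R * ((n'.+1 - k).+1`!)%:R))
  end.

Definition bernoulli (n : nat) : rat := nth 0 (bern_seq n) n.

(* Main.v *)
Require Import Defs.
From HB Require Import structures.
From mathcomp Require Import all_boot all_order all_algebra.
Import Order.TTheory GRing.Theory Num.Theory.
Local Open Scope ring_scope.

Lemma size_bern n : size (bern_seq n) = n.+1.
Proof. by elim: n => [|n IH] //=; rewrite size_rcons IH. Qed.

Lemma nth_bern n k : (k <= n)%N -> nth 0 (bern_seq n) k = bernoulli k.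
Proof.
elim: n => [|n IH]; first by rewrite leqn0 => /eqP ->.
rewrite leq_eqVlt => /orP [/eqP -> //| Hk].
by rewrite /= nth_rcons size_bern Hk IH.
Qed.

Lemma bern_rec n : bernoulli n.+1 =
  - (n.+1)`!%:R * \sum_(k < n.+1) bernoulli k / ((k`!)%:R * ((n.+1 - k).+1`!)%:R).
Proof.
rewrite /bernoulli /= nth_rcons size_bern ltnn eqxx; congr (_ * _).
apply: eq_bigr => k _; rewrite nth_bern // -ltnS; exact: ltn_ord.
Qed.

Lemma fact_neq0 n : (n`!)%:R != 0 :> rat.
Proof. by rewrite pnatr_eq0 -lt0n fact_gt0. Qed.

Lemma bern_sum n : (0 < n)%N ->
  \sum_(k < n.+1) bernoulli k / (k`!)%:R * ((n - k).+1`!)%:R^-1 = 0.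
Proof.
case: n => // n _.
rewrite big_ord_recr /= subnn bern_rec.
set S := \sum_(k < n.+1) _.
rewrite (_ : \sum_(i < n.+1) _ = S); last first.
  by apply: eq_bigr => i _ /=; rewrite invfM mulrA.
idtac.
rewrite (mulrAC _ S) mulNr mulfV ?fact_neq0 // mulN1r.
by rewrite /= invr1 mulr1 addrN.
Qed.
Definition eqm (K : nat) (p q : {poly rat}) := forall i, (i < K)%N -> p`_i = q`_i.

Lemma eqm_sym K p q : eqm K p q -> eqm K q p.
Proof. by move=> H i Hi; rewrite H. Qed.
Lemma eqm_trans K p q r : eqm K p q -> eqm K q r -> eqm K p r.
Proof. by move=> H1 H2 i Hi; rewrite H1 ?H2. Qed.
Lemma eqmM K p p' q q' : eqm K p p' -> eqm K q q' -> eqm K (p * q) (p' * q').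
Proof.
move=> Hp Hq i Hi; rewrite !coefM; apply: eq_bigr => j _.
have Hj : (j <= i)%N by rewrite -ltnS ltn_ord.
rewrite Hp ?Hq //; first exact: leq_ltn_trans (leq_subr _ _) Hi.
exact: leq_ltn_trans Hj Hi.
Qed.
Lemma eqmD K p p' q q' : eqm K p p' -> eqm K q q' -> eqm K (p + q) (p' + q').
Proof. by move=> Hp Hq i Hi; rewrite !coefD Hp ?Hq. Qed.
Lemma eqmB K p p' q q' : eqm K p p' -> eqm K q q' -> eqm K (p - q) (p' - q').
Proof. by move=> Hp Hq i Hi; rewrite !coefB Hp ?Hq. Qed.
Lemma eqm_refl K p : eqm K p p. Proof. by []. Qed.
Arguments eqm_sym {K p q}. Arguments eqm_trans {K p q r}.
Arguments eqmM {K p p' q q'}. Arguments eqmD {K p p' q q'}. Arguments eqmB {K p p' q q'}.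

Definition sc (c : rat) (p : {poly rat}) := \poly_(i < size p) (c ^+ i * p`_i).

Lemma coef_sc c p i : (sc c p)`_i = c ^+ i * p`_i.
Proof.
rewrite coef_poly; case: ltnP => // H.
by rewrite nth_default ?mulr0.
Qed.

Lemma scM c p q : sc c (p * q) = sc c p * sc c q.
Proof.
apply/polyP => i; rewrite coef_sc !coefM mulr_sumr; apply: eq_bigr => j _.
rewrite !coef_sc mulrACA -exprD subnKC //; by rewrite -ltnS ltn_ord.
Qed.

Lemma scD c p q : sc c (p + q) = sc c p + sc c q.
Proof. by apply/polyP => i; rewrite coefD !coef_sc coefD mulrDr. Qed.
Lemma scB c p q : sc c (p - q) = sc c p - sc c q.
Proof. by apply/polyP => i; rewrite coefB !coef_sc coefB mulrBr. Qed.
Lemma sc1 c : sc c 1 = 1.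
Proof. apply/polyP => i; rewrite coef_sc coefC; by case: i => [|i]; rewrite ?mulr0 ?mulr1. Qed.
Lemma scX c : sc c 'X = c%:P * 'X.
Proof.
apply/polyP => i; rewrite coef_sc coefCM coefX.
by case: i => [|[|i]] /=; rewrite ?mulr0 ?mulr1 ?expr1.
Qed.
Lemma sc_eqm c K p q : eqm K p q -> eqm K (sc c p) (sc c q).
Proof. by move=> H i Hi; rewrite !coef_sc H. Qed.

Definition Ex M : {poly rat} := \poly_(i < M) ((i`!)%:R)^-1.
Definition Gp M : {poly rat} := \poly_(i < M) (bernoulli i / (i`!)%:R).
Definition Fp M : {poly rat} := \poly_(i < M) (((i.+1)`!)%:R)^-1.

Lemma binq i j : (j <= i)%N ->
  'C(i, j)%:R / (i`!)%:R = (j`!)%:R^-1 * ((i - j)`!)%:R^-1 :> rat.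
Proof.
move=> H; rewrite -(bin_fact H) !natrM invfM mulrA mulfV ?mul1r ?invfM //.
by rewrite pnatr_eq0 -lt0n bin_gt0.
Qed.

Lemma Ex_bin M x : eqm M (Ex M * sc x (Ex M)) (sc (1 + x) (Ex M)).
Proof.
move=> i Hi; rewrite coefM coef_sc coef_poly Hi addrC exprDn mulr_suml.
apply: eq_bigr => j _.
have Hj : (j <= i)%N by rewrite -ltnS ltn_ord.
rewrite coef_sc !coef_poly (leq_ltn_trans Hj Hi) (leq_ltn_trans (leq_subr _ _) Hi).
rewrite expr1n mulr1 -[_ *+ 'C(i, j)]mulr_natr -mulrA binq //.
rewrite mulrA mulrC mulrA.
by rewrite mulrC (mulrC ((i - j)`!%:R^-1)).
Qed.

Lemma GF M : eqm M (Gp M * Fp M) 1.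
Proof.
move=> i Hi; rewrite coefM coefC.
have -> : \sum_(j < i.+1) (Gp M)`_j * (Fp M)`_(i - j) =
   \sum_(j < i.+1) bernoulli j / (j`!)%:R * ((i - j).+1`!)%:R^-1.
  apply: eq_bigr => j _.
  have Hj : (j <= i)%N by rewrite -ltnS ltn_ord.
  by rewrite !coef_poly (leq_ltn_trans Hj Hi) (leq_ltn_trans (leq_subr _ _) Hi).
case: i Hi => [|i] Hi.
  by rewrite big_ord1 /= invr1 !mulr1.
by rewrite bern_sum.
Qed.

Lemma XF M : eqm M ('X * Fp M) (Ex M - 1).
Proof.
move=> i Hi; rewrite coefXM coefB coefC !coef_poly Hi.
case: i Hi => [|i] Hi /=; first by rewrite invr1 subrr.
by rewrite (ltnW Hi) subr0.
Qed.

Lemma sc1E p : sc 1 p = p.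
Proof. by apply/polyP => i; rewrite coef_sc expr1n mul1r. Qed.

Lemma EEi M : (0 < M)%N -> eqm M (Ex M * sc (-1) (Ex M)) 1.
Proof.
move=> HM; apply: eqm_trans (Ex_bin M (-1)) _ => i Hi.
rewrite coef_sc subrr coefC coef_poly Hi.
by case: i Hi => [|i] Hi; rewrite ?expr0 ?mul1r ?invr1 ?expr0n ?mul0r.
Qed.

Lemma main_eqm M : (0 < M)%N ->
  eqm M ((sc 2 (Gp M) + 'X) * (Ex M - sc (-1) (Ex M)))
        ('X * (Ex M + sc (-1) (Ex M))).
Proof.
move=> HM.
set G := sc 2 (Gp M); set E := Ex M; set Ei := sc (-1) E.
have H1 : eqm M (G * sc 2 (Fp M)) 1.
  by rewrite /G -scM -(sc1 2); apply: sc_eqm; apply: GF.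
have H2 : eqm M (2%:P * 'X * sc 2 (Fp M)) (E * E - 1).
  rewrite -scX -scM; apply: eqm_trans (sc_eqm 2 _ _ _ (XF M)) _.
  rewrite scB sc1; apply: eqmB => //.
  apply: eqm_sym; rewrite -{2}(sc1E E).
  have -> : (2 : rat) = 1 + 1 by [].
  exact: (Ex_bin M 1).
have H3 : eqm M (2%:P * 'X) (G * (E * E - 1)).
  rewrite -[X in eqm M X _]mulr1.
  apply: eqm_trans (eqmM (eqm_refl M (2%:P * 'X)) (eqm_sym H1)) _.
  rewrite mulrCA; exact: eqmM (eqm_refl M G) H2.
have H4 : eqm M (2%:P * 'X * Ei) (G * (E - Ei)).
  apply: eqm_trans (eqmM H3 (eqm_refl M Ei)) _.
  rewrite -mulrA mulrBl mul1r -mulrA.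
  apply: eqmM => //; apply: eqmB => //.
  by rewrite -[X in eqm M _ X](mulr1 E); apply: eqmM => //; exact: EEi.
rewrite mulrDl.
apply: eqm_trans (eqmD (eqm_sym H4) (eqm_refl M ('X * (E - Ei)))) _.
have -> : (2 : rat) = 1 + 1 by [].
rewrite polyCD polyC1 !mulrDl !mul1r mulrBr mulrDr.
by rewrite addrC addrA subrK.
Qed.

Lemma sum_pair (f : nat -> rat) n :
  \sum_(j < n.*2) f j = \sum_(k < n) (f k.*2 + f k.*2.+1).
Proof.
elim: n => [|n IH]; first by rewrite !big_ord0.
by rewrite doubleS !big_ord_recr /= IH addrA.
Qed.

Lemma two_mul (y : rat) : y + y = 2 * y.
Proof. by rewrite -mulr2n -[2]/(2%:R) mulr_natl. Qed.

Lemma key n : \sum_(k < n.+1) 2 ^+ (k.*2) * bernoulli (k.*2) / (k.*2)`!%:R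
                 / ((n.*2 - k.*2).+1)`!%:R = ((n.*2)`!%:R)^-1.
Proof.
have H := @main_eqm (n.*2.+2) (ltn0Sn (n.*2.+1)) (n.*2.+1) (ltnSn (n.*2.+1)).
rewrite coefXM coefM /= coefD !coef_sc !coef_poly in H.
rewrite (_ : (n.*2 < n.*2.+2)%N) // -signr_odd odd_double expr0 mul1r in H.
have SP (f : nat -> rat) : \sum_(j < n.*2.+2) f j = \sum_(k < n.+1) (f k.*2 + f k.*2.+1).
  by rewrite -doubleS sum_pair.
rewrite (SP (fun j => (sc 2 (Gp n.*2.+2) + 'X)`_j *
       (Ex n.*2.+2 - sc (-1) (Ex n.*2.+2))`_(n.*2.+1 - j))) in H.
apply: (mulfI (_ : (2 : rat) != 0)) => //.
rewrite [RHS]mulr_natl [RHS]mulr2n; apply: (eq_trans _ H); rewrite mulr_sumr; apply: eq_bigr => k _.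
have Hk : (k <= n)%N by rewrite -ltnS ltn_ord.
have Hk2 : (k.*2 <= n.*2)%N by rewrite leq_double.
have -> : (sc 2 (Gp n.*2.+2) + 'X)`_k.*2.+1 *
     (Ex n.*2.+2 - sc (-1) (Ex n.*2.+2))`_(n.*2.+1 - k.*2.+1) = 0.
  by rewrite subSS -doubleB coefB coef_sc -signr_odd odd_double expr0 mul1r subrr mulr0.
rewrite addr0 subSn // coefB coef_sc -signr_odd /= -doubleB odd_double /= expr1.
rewrite coefD coef_sc coefX !coef_poly.
rewrite (_ : (k.*2 < n.*2.+2)%N); last by rewrite ltnS ltnW.
rewrite (_ : ((n - k).*2.+1 < n.*2.+2)%N); last by rewrite ltnS ltnS doubleB leq_subr.
rewrite (_ : (k.*2 == 1)%N = false); last by case: (nat_of_ord k).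
rewrite (_ : false%:R = 0 :> rat) // addr0 mulN1r opprK two_mul.
by rewrite mulrCA !mulrA.
Qed.

Lemma term n k : (k <= n)%N ->
  'C(n.*2, k.*2)%:R * (2 ^ (k.*2))%:R * bernoulli (k.*2) / ((n.*2 - k.*2).+1)%:R
  = (n.*2)`!%:R * (2 ^+ (k.*2) * bernoulli (k.*2) / (k.*2)`!%:R
                 / ((n.*2 - k.*2).+1)`!%:R) :> rat.
Proof.
move=> Hk; have Hk2 : (k.*2 <= n.*2)%N by rewrite leq_double.
have HC : 'C(n.*2, k.*2)%:R = (n.*2)`!%:R * ((k.*2)`!%:R^-1 * ((n.*2 - k.*2)`!%:R^-1)) :> rat.
  by rewrite -binq // mulrC mulfVK // fact_neq0.
rewrite HC natrX factS natrM invfM.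
move: ((n.*2)`!%:R) ((k.*2)`!%:R^-1) ((n.*2 - k.*2)`!%:R^-1) ((n.*2 - k.*2).+1%:R^-1)
  (2 ^+ k.*2 : rat) (bernoulli k.*2) => N a b c T B.
rewrite -!mulrA; congr (_ * _).
rewrite [c * b]mulrC !mulrA; congr (_ * _).
by rewrite [a*b*T]mulrC mulrAC mulrA.
Qed.

Theorem mainTheorem20 (n : nat) (hn : (1 <= n)%N) :
  ((n.*2)`! ^ 2)%:R / (((n.*2).-1)`! * ((n.*2).+1)`!)%:R
  = \sum_(1 <= k < n.+1)
      'C(n.*2, k.*2)%:R * (2 ^ (k.*2))%:R * bernoulli (k.*2)
        / ((n.*2 - k.*2).+1)%:R :> rat.
Proof.
rewrite big_add1 /=.
rewrite (eq_big_nat _ _ (F2 := fun k => (n.*2)`!%:R * (2 ^+ (k.+1.*2) * bernoulli (k.+1.*2)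
     / (k.+1.*2)`!%:R / ((n.*2 - k.+1.*2).+1)`!%:R))); last first.
  by move=> k /andP [_ Hk]; rewrite term.
rewrite -mulr_sumr.
have K := key n; rewrite big_ord_recl /= subn0 in K.
rewrite big_mkord.
rewrite (eq_bigr (fun i : 'I_n => 2 ^+ (bump 0 i).*2 * bernoulli (bump 0 i).*2 / ((bump 0 i).*2)`!%:R /
       ((n.*2 - (bump 0 i).*2).+1)`!%:R)); last by move=> i _; rewrite /bump /= add1n.
rewrite (_ : \sum_(i < n) _ = (n.*2)`!%:R^-1 - (n.*2.+1)`!%:R^-1); last first.
  rewrite -K (_ : 2 ^+ 0.*2 * bernoulli 0.*2 / (0.*2)`!%:R = 1 :> rat); last by [].
  by rewrite mul1r addrC addKr.
clear K; case: n hn => [//|n _]; rewrite doubleS -[(n.*2.+2).-1]/(n.*2.+1).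
set p := n.*2.+1.
have qnz : (p.+2)%:R != 0 :> rat by rewrite pnatr_eq0.
have E1 : (p.+1)`!%:R * (p.+2)`!%:R^-1 = (p.+2)%:R^-1 :> rat.
  by rewrite (factS p.+1) natrM invfM mulrCA mulfV ?fact_neq0 // mulr1.
rewrite mulrBr mulfV ?fact_neq0 // E1.
rewrite expnS expn1 (factS p.+1) (factS p).
move: (p`!) (fact_gt0 p) => f fpos.
have fnz : f%:R != 0 :> rat by rewrite pnatr_eq0 -lt0n.
have pnz : (p.+1)%:R != 0 :> rat by rewrite pnatr_eq0.
rewrite !natrM !invfM !mulrA mulfK // (mulrAC _ _ (p.+1%:R^-1)) mulfK //.
rewrite (mulrAC _ _ (f%:R^-1)) mulfK //.
apply: (mulIf qnz); rewrite mulrBl mulfVK // mul1r mulVf //.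
by rewrite -[in RHS]natr1 addrK.
Qed.
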